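(* Let $X$ be a nonempty discrete (finite or countable) set, $p^*$ a probability distribution on $X$, $X^{\checkmark}=\{x\in X:p^*(x)>0\}$, and let $x_1,\dots,x_N\in X^{\checkmark}$ ($N\ge1$) with dataset $\mathcal{X}=\{x_1,\dots,x_N\}$ and $q(x)=\frac1N\#\{i:x_i=x\}$. Let $F$ be a set of probability distributions on $X$, and for $x\in X$ let $C(x)=\{x'\in X:\ f(x')=f(x)\text{ for all } f\in F\}$. Suppose (i) $F$ generalizes from $\mathcal{X}$ to $X^{\checkmark}$, i.e., $\{C(x):x\in\mathcal{X}\}=\{C(x):x\in X^{\checkmark}\}$; (ii) $p^*\in F$; (iii) no two distinct data points of $\mathcal{X}$ lie in the same class, i.e., $C(x)\ne C(x')$ for distinct $x,x'\in\mathcal{X}$. Then every maximizer $\hat p^*_F$ of $\mathbb{E}_{q(x)}[\log p(x)]=\frac1N\sum_i\log p(x_i)$ over $p\in F$ is complete: $\hat p^*_F(x)>0$ for all $x\in X^{\checkmark}$.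
   Context: A probability distribution on $X$ is $p:X\to[0,\infty)$ with $\sum_x p(x)=1$; $\log 0=-\infty$. A distribution is complete if it assigns positive mass to every valid point $x\in X^{\checkmark}$. *)

(* Defs.v *)
From HB Require Import structures.
From mathcomp Require Import all_boot all_order all_algebra.
From mathcomp Require Import all_classical all_reals all_analysis.
Set Implicit Arguments. Unset Strict Implicit. Unset Printing Implicit Defensive.
Import Order.TTheory GRing.Theory Num.Theory.
Local Open Scope classical_set_scope.
Local Open Scope ring_scope.

Definition is_distr (R : realType) (X : choiceType) (p : X -> R) : Prop :=
  (forall x, 0 <= p x) /\ (\esum_(x in [set: X]) (p x)%:E = 1)%E.

Definition elog (R : realType) (r : R) : \bar R :=
  if 0 < r then (ln r)%:E else -oo%E.

Definition avg_loglik (R : realType) (X : Type) (N : nat) (xs : 'I_N -> X)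
  (p : X -> R) : \bar R :=
  ((N%:R^-1)%:E * \sum_(i < N) elog (p (xs i)))%E.

Definition cls (R : realType) (X : Type) (F : set (X -> R)) (x : X) : set X :=
  [set x' | forall f, F f -> f x' = f x].

Definition valid (R : realType) (X : Type) (pstar : X -> R) : set X :=
  [set x | 0 < pstar x].

(* Main.v *)
Require Import Defs.
From HB Require Import structures.
From mathcomp Require Import all_boot all_order all_algebra.
From mathcomp Require Import all_classical all_reals all_analysis.
Import Order.TTheory GRing.Theory Num.Theory.
Local Open Scope classical_set_scope.
Local Open Scope ring_scope.

Theorem mainTheorem7 (R : realType) (X : countType) (pstar : X -> R)
  (N : nat) (xs : 'I_N -> X) (F : set (X -> R)) (phat : X -> R) :
  is_distr pstar ->
  (0 < N)%N ->
  (forall i, valid pstar (xs i)) ->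
  (forall f, F f -> is_distr f) ->
  (* (i) F generalizes from the dataset to X^check *)
  (fun i => cls F (xs i)) @` [set: 'I_N] = cls F @` valid pstar ->
  (* (ii) p* in F *)
  F pstar ->
  (* (iii) distinct data points lie in distinct classes *)
  (forall i j, xs i <> xs j -> cls F (xs i) <> cls F (xs j)) ->
  (* phat is a maximizer of the expected log-likelihood over F *)
  F phat ->
  (forall p, F p -> (avg_loglik xs p <= avg_loglik xs phat)%E) ->
  forall x, valid pstar x -> 0 < phat x.
Proof.
move=> _ N0 vxs _ gen Fp _ Fh maxh x vx.
have hpos : forall i, 0 < phat (xs i).
  move=> i0; rewrite ltNge; apply/negP => hle.
  have fin : (avg_loglik xs pstar \is a fin_num)%E.
    rewrite /avg_loglik; apply: fin_numM => //.
    apply/sum_fin_numP => i _ _.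
    by rewrite /elog; have := vxs i; rewrite /valid /= => ->.
  have : (avg_loglik xs phat = -oo)%E.
    rewrite /avg_loglik (bigD1 i0) //= {1}/elog ltNge hle /= addNye.
    by apply: gt0_muleNy; rewrite lte_fin invr_gt0 ltr0n.
  move=> eq; have := maxh _ Fp; rewrite eq leeNy_eq => /eqP h.
  by move: fin; rewrite h.
have : (cls F @` valid pstar) (cls F x) by exists x.
rewrite -gen => -[i _ ci].
have : cls F (xs i) x by rewrite ci /cls /=.
by move=> /(_ _ Fh) ->.
Qed.
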